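(* Let $0<\delta<1/100$, $\beta\in\mathbb R$, $1<q<\infty$, and let $f\in\mathbb M^2\cap\mathbb W_q^{\beta,\beta}$ be such that its restrictions to $[-1,-1+100\delta^2]$ and to $[1-100\delta^2,1]$ are linear polynomials. Then \[ \Omega_\varphi^2(f,\delta)_{\varphi^{2\beta},q}\le c\,\delta^{1/q-1}\,\Omega_\varphi^2(f,\delta)_{\varphi^{2\beta-1+1/q},1}, \] with $c$ independent of $f$ and $\delta$.
   Context: For $x\in[-1,1]$, $\varphi(x)=\sqrt{1-x^2}$ and $w_{\beta,\beta}=\varphi^{2\beta}$; $\mathbb W_q^{\beta,\beta}=\{f:\|\varphi^{2\beta}f\|_{L_q[-1,1]}<\infty\}$. $\Delta_h^2(f,x)=f(x-h)-2f(x)+f(x+h)$ if $x\pm h\in[-1,1]$, else $0$. For a weight $w$, $\Omega_\varphi^2(f,\delta)_{w,q}=\sup_{0<h\le\delta}\|w(x)\Delta^2_{h\varphi(x)}(f,x)\|_{L_q[-1+8h^2,1-8h^2]}$. $\mathbb M^2$ is the set of convex functions on $(-1,1)$. *)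

(* Defs.v *)
From HB Require Import structures.
From mathcomp Require Import all_boot all_order all_algebra.
From mathcomp Require Import all_classical all_reals all_analysis.
Set Implicit Arguments. Unset Strict Implicit. Unset Printing Implicit Defensive.
Import Order.TTheory GRing.Theory Num.Theory.
Import numFieldNormedType.Exports.
Local Open Scope classical_set_scope.
Local Open Scope ring_scope.

Section Defs.
Variable R : realType.

Definition phi (x : R) : R := Num.sqrt (1 - x ^+ 2).

Definition Delta2 (f : R -> R) (h x : R) : R :=
  if (-1 <= x - h) && (x + h <= 1) then f (x - h) - 2 * f x + f (x + h) else 0.

Definition Lqnorm (a b q : R) (g : R -> R) : \bar R :=
  ((\int[lebesgue_measure]_(x in `[a, b]) ((`|g x| `^ q)%:E)) `^ q^-1)%E.

Definition Omega2 (f : R -> R) (delta : R) (w : R -> R) (q : R) : \bar R :=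
  ereal_sup [set Lqnorm (-1 + 8 * h ^+ 2) (1 - 8 * h ^+ 2) q
                  (fun x => w x * Delta2 f (h * phi x) x) | h in `]0, delta]].

(* M^2: convex functions on (-1,1) *)
Definition convex_on_open (f : R -> R) : Prop :=
  forall x y t : R, -1 < x < 1 -> -1 < y < 1 -> 0 <= t <= 1 ->
    f (t * x + (1 - t) * y) <= t * f x + (1 - t) * f y.

(* W_q^{beta,beta}: || phi^{2 beta} f ||_{L_q[-1,1]} < oo *)
Definition in_Wq (beta q : R) (f : R -> R) : Prop :=
  (Lqnorm (-1) 1 q (fun x => (phi x `^ (2 * beta) * f x)%R) < +oo)%E.

Definition linear_on (a b : R) (f : R -> R) : Prop :=
  exists c0 c1 : R, forall x, a <= x <= b -> f x = c1 * x + c0.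

End Defs.

(* Main.v *)
Require Import Defs.
From HB Require Import structures.
From mathcomp Require Import all_boot all_order all_algebra.
From mathcomp Require Import all_classical all_reals all_analysis.
From mathcomp Require Import ring lra.
Import Order.TTheory GRing.Theory Num.Theory.
Local Open Scope ring_scope.

Section PartA.
Import Order.TTheory GRing.Theory Num.Theory.
Set Implicit Arguments. Unset Strict Implicit.
Import numFieldNormedType.Exports.
Local Open Scope classical_set_scope.
Local Open Scope ring_scope.
Import HBNNSimple.
Local Open Scope ereal_scope.

Section Int.
Variable R : realType.
Notation mu := (@lebesgue_measure R).

Lemma le_int_nm (D1 D2 : set R) (f1 f2 : R -> \bar R) :
  (forall x, D1 x -> 0 <= f1 x) -> (forall x, D2 x -> 0 <= f2 x) ->
  (forall x, D1 x -> D2 x /\ f1 x <= f2 x) ->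
  \int[mu]_(x in D1) f1 x <= \int[mu]_(x in D2) f2 x.
Proof.
move=> f10 f20 H.
rewrite (ge0_integralE mu f10) (ge0_integralE mu f20).
apply: ge_ereal_sup => _ [h hf <-]; apply: ereal_sup_ubound.
exists h => // x; apply: le_trans (hf x) _; rewrite /patch.
case: ifPn => [Dx|nDx].
  move: Dx; rewrite inE => Dx; have [D2x le] := H x Dx; by rewrite ifT // inE.
by case: ifPn => // ; rewrite inE => /f20.
Qed.

Lemma int_scale_le (D : set R) (f : R -> \bar R) (k : R) :
  (0 <= k)%R -> (forall x, D x -> 0 <= f x) ->
  \int[mu]_(x in D) (k%:E * f x) <= k%:E * \int[mu]_(x in D) f x.
Proof.
move=> k00 f0.
have [->|kn0] := eqVneq k 0%R.
  by rewrite mul0e integral0_eq // => x _; rewrite mul0e.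
have k0 : (0 < k)%R by rewrite lt_neqAle eq_sym kn0 k00.
have kf0 : forall x, D x -> 0 <= k%:E * f x.
  by move=> x Dx; apply: mule_ge0; [rewrite lee_fin ltW|exact: f0].
rewrite (ge0_integralE mu f0) (ge0_integralE mu kf0).
apply: ge_ereal_sup => _ [h hf <-].
have ki0 : (0 <= k^-1)%R by rewrite invr_ge0 ltW.
pose h' := scale_nnsfun h ki0.
have -> : sintegral mu h = k%:E * sintegral mu h'.
  rewrite (_ : sintegral mu h' = sintegral mu (cst k^-1 \* h)%R) //.
  by rewrite sintegralrM muleA -EFinM divff ?gt_eqF // mul1e.
apply: lee_wpmul2l; first by rewrite lee_fin ltW.
apply: ereal_sup_ubound; exists h' => // x.
have := hf x; rewrite /patch /=; case: ifPn => _.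
  move=> hx; rewrite -(@lee_pmul2l _ k%:E) ?lte_fin //.
  by rewrite -EFinM mulrA divff ?gt_eqF // mul1r.
move=> hx; have hx0 : h x = 0%R by apply/eqP; rewrite eq_le fun_ge0 andbT -lee_fin.
by rewrite hx0 mulr0.
Qed.
End Int.

End PartA.

Section PartB.
Import Order.TTheory GRing.Theory Num.Theory.
Set Implicit Arguments. Unset Strict Implicit.
Local Open Scope ring_scope.

Section Conv.
Variable R : realType.
Implicit Types f : R -> R.

Definition sd f (t y : R) := f (y - t) - 2 * f y + f (y + t).

Lemma conv2 f A m B : convex_on_open f -> -1 < A -> B < 1 -> A <= m -> m <= B ->
  (B - A) * f m <= (B - m) * f A + (m - A) * f B.
Proof.
move=> cf hA hB hAm hmB.
have [eAB|nAB] := eqVneq A B.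
  have em : m = A by apply/eqP; rewrite eq_le hAm eAB hmB.
  by rewrite em eAB !subrr !mul0r addr0.
have lAB : A < B by rewrite lt_neqAle nAB (le_trans hAm hmB).
have L0 : 0 < B - A by rewrite subr_gt0.
set t := (B - m) / (B - A).
have t0 : 0 <= t <= 1.
  apply/andP; split; first by apply: divr_ge0; lra.
  by rewrite /t ler_pdivrMr // mul1r; lra.
have em : m = t * A + (1 - t) * B.
  rewrite /t; field; lra.
have := cf A B t; rewrite -em => /(_ _ _ t0).
have hA1 : -1 < A < 1 by apply/andP; split; lra.
have hB1 : -1 < B < 1 by apply/andP; split; lra.
move=> /(_ hA1 hB1) H.
rewrite -(ler_pM2l L0) in H.
suff -> : (B - m) * f A + (m - A) * f B = (B - A) * (t * f A + (1 - t) * f B) by [].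
rewrite /t; field; lra.
Qed.

Lemma sd_mono f t1 t2 y : convex_on_open f -> 0 <= t1 -> t1 <= t2 ->
  -1 < y - t2 -> y + t2 < 1 -> sd f t1 y <= sd f t2 y.
Proof.
move=> cf h1 h12 hl hr; rewrite /sd.
have [e0|n0] := eqVneq t2 0.
  have -> : t1 = t2 by lra.
  by [].
have L0 : 0 < (y + t2) - (y - t2) by lra.
have H1 := @conv2 f (y - t2) (y - t1) (y + t2) cf hl hr ltac:(lra) ltac:(lra).
have H2 := @conv2 f (y - t2) (y + t1) (y + t2) cf hl hr ltac:(lra) ltac:(lra).
suff : f (y - t1) + f (y + t1) <= f (y - t2) + f (y + t2) by lra.
rewrite -(ler_pM2l L0); nra.
Qed.

Lemma sd_shift_pos f s d z : convex_on_open f -> 0 <= s -> 0 <= d ->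
  -1 < z - s -> z + s + 2 * d < 1 -> sd f s z <= sd f (s + d) (z + d).
Proof.
move=> cf hs hd hl hr; rewrite /sd.
have [e0|n0] := eqVneq (s + 2 * d) 0.
  have -> : d = 0 by lra.
  by rewrite !addr0.
have L0 : 0 < (z + s + 2 * d) - z by lra.
have hz : -1 < z by lra.
have H1 := @conv2 f z (z + d) (z + s + 2 * d) cf hz hr ltac:(lra) ltac:(lra).
have H2 := @conv2 f z (z + s) (z + s + 2 * d) cf hz hr ltac:(lra) ltac:(lra).
have -> : z + d - (s + d) = z - s by ring.
have -> : z + d + (s + d) = z + s + 2 * d by ring.
suff : 2 * f (z + d) + f (z + s) <= 2 * f z + f (z + s + 2 * d) by lra.
rewrite -(ler_pM2l L0); nra.
Qed.

Lemma sd_shift_neg f s e z : convex_on_open f -> 0 <= s -> 0 <= e ->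
  -1 < z - s - 2 * e -> z + s < 1 -> sd f s z <= sd f (s + e) (z - e).
Proof.
move=> cf hs he hl hr; rewrite /sd.
have [e0|n0] := eqVneq (s + 2 * e) 0.
  have -> : e = 0 by lra.
  by rewrite !subr0 !addr0.
have L0 : 0 < z - (z - s - 2 * e) by lra.
have hz : z < 1 by lra.
have H1 := @conv2 f (z - s - 2 * e) (z - s) z cf hl hz ltac:(lra) ltac:(lra).
have H2 := @conv2 f (z - s - 2 * e) (z - e) z cf hl hz ltac:(lra) ltac:(lra).
have -> : z - e - (s + e) = z - s - 2 * e by ring.
have -> : z - e + (s + e) = z + s by ring.
suff : f (z - s) + 2 * f (z - e) <= f (z - s - 2 * e) + 2 * f z by lra.
rewrite -(ler_pM2l L0); nra.
Qed.

Lemma sd_comp f s t z y : convex_on_open f -> 0 <= s -> s + `|y - z| <= t ->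
  -1 < y - t -> y + t < 1 -> sd f s z <= sd f t y.
Proof.
move=> cf hs ht hl hr.
have [yz|yz] := lerP z y.
  rewrite ger0_norm ?subr_ge0 // in ht.
  have := @sd_shift_pos f s (y - z) z cf hs ltac:(lra) ltac:(lra) ltac:(lra).
  have -> : z + (y - z) = y by ring.
  move=> H; apply: le_trans H _.
  apply: sd_mono => //; lra.
rewrite ltr0_norm ?subr_lt0 // in ht.
have := @sd_shift_neg f s (z - y) z cf hs ltac:(lra) ltac:(lra) ltac:(lra).
have -> : z - (z - y) = y by ring.
move=> H; apply: le_trans H _.
apply: sd_mono => //; lra.
Qed.

End Conv.

End PartB.

Section PartC.
Import Order.TTheory GRing.Theory Num.Theory.
Set Implicit Arguments. Unset Strict Implicit.
Local Open Scope ring_scope.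

Section Geom.
Variable R : realType.

Lemma le_of_sqr (a b : R) : 0 <= b -> a^+2 <= b^+2 -> a <= b.
Proof.
move=> b0 h; have [a0|a0] := lerP a 0; first by lra.
rewrite -ler_sqr ?nnegrE //; exact: ltW.
Qed.

Lemma dp0_le (d x0 p0 : R) : 0 < d -> 80 * d^+2 <= 1 + x0 -> x0 <= 1 ->
  p0^+2 = 1 - x0^+2 -> d * p0 <= (1 + x0) / 6.
Proof.
move=> d0 hl x1 ep0.
have d20 := sqr_ge0 d.
have hpa : p0^+2 <= 2 * (1 + x0).
  have : 0 <= (1 + x0) * (1 + x0) by apply: mulr_ge0; lra.
  rewrite ep0; lra.
apply: le_of_sqr; first by lra.
have h1 : d^+2 * p0^+2 <= d^+2 * (2 * (1 + x0)) by apply: ler_wpM2l.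
have h2 : d^+2 * (2 * (1 + x0)) <= (1 + x0) / 80 * (2 * (1 + x0)).
  by apply: ler_wpM2r; lra.
rewrite exprMn; lra.
Qed.

Lemma p0_big (d x0 p0 : R) : 0 < d -> 80 * d^+2 <= 1 + x0 -> 80 * d^+2 <= 1 - x0 ->
  0 < p0 -> p0^+2 = 1 - x0^+2 -> d * p0 <= p0^+2 / 8.
Proof.
move=> d0 hl hr p00 ep0.
have d20 := sqr_ge0 d.
have hp0 : 80 * d^+2 <= p0^+2.
  rewrite ep0; have [x0p|x0n] := lerP 0 x0.
    have : 0 <= x0 * (1 - x0) by apply: mulr_ge0; lra.
    lra.
  have : 0 <= (- x0) * (1 + x0) by apply: mulr_ge0; lra.
  lra.
have hdp : 8 * d <= p0.
  apply: le_of_sqr; first by lra.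
  have := sqr_ge0 d; rewrite exprMn; lra.
have : (8 * d) * p0 <= p0 * p0 by apply: ler_wpM2r; lra.
rewrite expr2; lra.
Qed.

Lemma py_bounds (d x0 e p0 : R) : 0 < d -> -1 <= x0 <= 1 ->
  0 < p0 -> p0^+2 = 1 - x0^+2 -> d * p0 <= p0^+2 / 8 ->
  `|e| <= 6/10 * (d * p0) ->
  (9/10 * p0)^+2 <= 1 - (x0 + e)^+2 /\ 1 - (x0 + e)^+2 <= (11/10 * p0)^+2.
Proof.
move=> d0 /andP[xl xr] p00 ep0 hdp2; rewrite ler_norml => /andP[he2 he1].
set E := 6/10 * (d * p0) in he1 he2 *.
have E0 : 0 <= E by rewrite /E; apply: mulr_ge0 => //; apply: mulr_ge0; lra.
have hpy2 : 1 - (x0 + e)^+2 = p0^+2 - 2 * (x0 * e) - e^+2 by rewrite ep0; ring.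
have hee : e^+2 <= E^+2.
  have : 0 <= (E - e) * (E + e) by apply: mulr_ge0; lra.
  lra.
have hxe1 : x0 * e <= E.
  have : 0 <= (1 - x0) * (E + e) by apply: mulr_ge0; lra.
  have : 0 <= (1 + x0) * (E - e) by apply: mulr_ge0; lra.
  lra.
have hxe2 : - E <= x0 * e.
  have : 0 <= (1 - x0) * (E - e) by apply: mulr_ge0; lra.
  have : 0 <= (1 + x0) * (E + e) by apply: mulr_ge0; lra.
  lra.
have hE : E <= 3 / 40 * p0^+2 by rewrite /E; lra.
have p021 : p0^+2 <= 1 by have := sqr_ge0 x0; lra.
have hE2 : E^+2 <= 1/100 * p0^+2.
  have h1 : E * E <= E * (3 / 40 * p0^+2) by apply: ler_wpM2l.
  have h2 : E * (3 / 40 * p0^+2) <= (3 / 40 * p0^+2) * (3 / 40 * p0^+2).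
    by apply: ler_wpM2r => //; apply: mulr_ge0 => //; apply: sqr_ge0.
  have h3 : p0^+2 * p0^+2 <= p0^+2 by rewrite ler_piMl ?sqr_ge0.
  rewrite expr2; lra.
rewrite hpy2 !exprMn; have := sqr_ge0 e; lra.
Qed.

Lemma geom (d x0 z y s p0 py : R) :
  0 < d -> 80 * d^+2 <= 1 + x0 -> 80 * d^+2 <= 1 - x0 ->
  0 < p0 -> p0^+2 = 1 - x0^+2 -> py = Num.sqrt (1 - y^+2) ->
  0 <= s -> s <= d * p0 -> `|z - x0| <= s / 2 -> `|y - z| <= d * p0 / 10 ->
  (9/10 * p0 <= py /\ py <= 11/10 * p0) /\ (-1 + 8 * d^+2 <= y /\ y <= 1 - 8 * d^+2) /\
      (-1 < y - d * py /\ y + d * py < 1) /\ s / 2 + `|y - z| <= d * py.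
Proof.
move=> d0 hl hr p00 ep0 epy s0 sd hz hy.
have d2p : 0 < d^+2 by rewrite exprn_gt0.
have ex0 : -1 <= x0 <= 1 by apply/andP; split; lra.
have hdp2 := @p0_big d x0 p0 d0 hl hr p00 ep0.
have hdpa := @dp0_le d x0 p0 d0 hl ltac:(lra) ep0.
have hdpb := @dp0_le d (- x0) p0 d0 ltac:(lra) ltac:(lra) ltac:(rewrite sqrrN; exact: ep0).
have he : `|y - x0| <= 6/10 * (d * p0).
  have := ler_normD (y - z) (z - x0).
  have -> : y - z + (z - x0) = y - x0 by ring.
  lra.
have [py2l py2u] := @py_bounds d x0 (y - x0) p0 d0 ex0 p00 ep0 hdp2 he.
have ey : x0 + (y - x0) = y by ring.
rewrite ey in py2l py2u.
have epy2 : py^+2 = 1 - y^+2 by rewrite epy sqr_sqrtr //; have := sqr_ge0 (9/10 * p0); lra.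
have py0 : 0 <= py by rewrite epy sqrtr_ge0.
have pyl : 9/10 * p0 <= py by apply: le_of_sqr; rewrite ?epy2.
have pyu : py <= 11/10 * p0 by apply: le_of_sqr; [lra| rewrite epy2].
have hdpy : d * py <= 11/10 * (d * p0).
  have : d * py <= d * (11/10 * p0) by apply: ler_wpM2l; lra.
  lra.
have hdpy' : 9/10 * (d * p0) <= d * py.
  have : d * (9/10 * p0) <= d * py by apply: ler_wpM2l; lra.
  lra.
move: he; rewrite ler_norml => /andP[he1 he2].
split; first by split.
split; first by split; lra.
split; first by split; lra.
lra.
Qed.
End Geom.

End PartC.

Section PartD.
Import Order.TTheory GRing.Theory Num.Theory.
Import numFieldNormedType.Exports.
Set Implicit Arguments. Unset Strict Implicit.
Local Open Scope classical_set_scope.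
Local Open Scope ring_scope.

Section Main.
Variable R : realType.
Implicit Types f : R -> R.

Definition kap (g : R) : R := Num.min ((9/10) `^ g) ((11/10) `^ g).

Lemma kap_gt0 g : 0 < kap g.
Proof. by rewrite /kap lt_min !powR_gt0. Qed.

Lemma kap_le g p0 py : 0 < p0 -> 9/10 * p0 <= py -> py <= 11/10 * p0 ->
  kap g * p0 `^ g <= py `^ g.
Proof.
move=> p00 hl hu.
have py0 : 0 < py by lra.
have [g0|g0] := lerP 0 g.
  apply: (@le_trans _ _ ((9/10 * p0) `^ g)).
    rewrite powRM ?ler_wpM2r ?powR_ge0 // ?ge_min ?lexx //; lra.
  by apply: (@ge0_ler_powR R g g0 (9/10 * p0) py); rewrite ?nnegrE; lra.
apply: (@le_trans _ _ ((11/10 * p0) `^ g)).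
  rewrite powRM ?ler_wpM2r ?powR_ge0 // ?ge_min ?lexx ?orbT //; lra.
have e x : x `^ g = (x `^ (- g))^-1 by rewrite -powRN opprK.
rewrite !e lef_pV2 ?posrE ?powR_gt0 //; try lra.
apply: (@ge0_ler_powR R (- g) ltac:(lra) py (11/10 * p0)); rewrite ?nnegrE; lra.
Qed.

Lemma lin0 f a b t u : linear_on a b f -> a <= u - t -> u + t <= b -> 0 <= t ->
  sd f t u = 0.
Proof.
move=> [c0 [c1 H]] h1 h2 t0; rewrite /sd !H; try (apply/andP; split; lra).
ring.
Qed.

Lemma sd_split f s x : sd f s x =
  sd f (s/2) (x - s/2) + 2 * sd f (s/2) x + sd f (s/2) (x + s/2).
Proof.
rewrite /sd.
have -> : x - s / 2 - s / 2 = x - s by field.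
have -> : x - s / 2 + s / 2 = x by field.
have -> : x + s / 2 - s / 2 = x by field.
have -> : x + s / 2 + s / 2 = x + s by field.
ring.
Qed.

Lemma sd_ge0 f t y : convex_on_open f -> 0 <= t -> -1 < y - t -> y + t < 1 ->
  0 <= sd f t y.
Proof.
move=> cf t0 h1 h2.
have := @sd_mono R f 0 t y cf (lexx 0) t0 h1 h2.
by rewrite /sd !subr0 !addr0 (_ : f y - 2 * f y + f y = 0) //; ring.
Qed.
End Main.

End PartD.

Section PartE.
Import Order.TTheory GRing.Theory Num.Theory.
Import numFieldNormedType.Exports.
Set Implicit Arguments. Unset Strict Implicit.
Local Open Scope classical_set_scope.
Local Open Scope ring_scope.

Section Z.
Variable R : realType.
Implicit Types f : R -> R.

Lemma phi_sq (x : R) : -1 <= x <= 1 -> phi x ^+ 2 = 1 - x ^+ 2.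
Proof.
move=> /andP[h1 h2]; rewrite /phi sqr_sqrtr //.
have : 0 <= (1 - x) * (1 + x) by apply: mulr_ge0; lra.
lra.
Qed.

Lemma zbound f (g d r x0 z s : R) : convex_on_open f -> 0 < d ->
  80 * d^+2 <= 1 + x0 -> 80 * d^+2 <= 1 - x0 ->
  0 <= s -> s <= d * phi x0 -> `|z - x0| <= s / 2 -> 0 <= r ->
  (\int[lebesgue_measure]_(y in `[(-1 + 8 * d^+2)%R, (1 - 8 * d^+2)%R])
      (`|phi y `^ g * Delta2 f (d * phi y) y|%R)%:E <= r%:E)%E ->
  kap g * phi x0 `^ g * sd f (s/2) z * (d * phi x0 / 5) <= r.
Proof.
move=> cf d0 hl hr s0 sd0 hz r0 HI.
have d20 := sqr_ge0 d.
have ex0 : -1 <= x0 <= 1 by apply/andP; split; lra.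
have ep0 := phi_sq ex0.
set p0 := phi x0 in sd0 ep0 *.
have p00 : 0 < p0.
  rewrite /p0 /phi sqrtr_gt0.
  have : 0 < (1 - x0) * (1 + x0) by apply: mulr_gt0; have := exprn_gt0 2 d0; lra.
  lra.
set v := sd f (s/2) z.
have k0 := kap_gt0 g.
have a0 : 0 <= kap g * p0 `^ g by apply: mulr_ge0; [exact: ltW|exact: powR_ge0].
have w0 : 0 <= d * p0 / 5 by apply: mulr_ge0 => //; apply: mulr_ge0; lra.
have [v0|v0] := ltP v 0.
  have : kap g * p0 `^ g * v <= 0 by nra.
  nra.
set eps := d * p0 / 10.
have eps0 : 0 <= eps by rewrite /eps; apply: mulr_ge0 => //; apply: mulr_ge0; lra.
set c := kap g * p0 `^ g * v.
have c0 : 0 <= c by apply: mulr_ge0.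
have H1 : (\int[lebesgue_measure]_(y in `[(z - eps)%R, (z + eps)%R]) (cst c%:E) y <=
   \int[lebesgue_measure]_(y in `[(-1 + 8 * d^+2)%R, (1 - 8 * d^+2)%R])
      (`|phi y `^ g * Delta2 f (d * phi y) y|%R)%:E)%E.
  apply: le_int_nm.
  - by move=> y _; rewrite lee_fin.
  - by move=> y _; rewrite lee_fin.
  move=> y /=; rewrite in_itv /= => /andP[y1 y2].
  have hy : `|y - z| <= d * p0 / 10 by rewrite ler_norml; apply/andP; split; rewrite /eps in y1 y2; lra.
  have [[pyl pyu] [[yl yr] [[cl cr] hc]]] :=
    @geom R d x0 z y s p0 (phi y) d0 hl hr p00 ep0 erefl s0 sd0 hz hy.
  split; first by rewrite /= in_itv /=; apply/andP; split.
  rewrite lee_fin.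
  have -> : Delta2 f (d * phi y) y = sd f (d * phi y) y.
    by rewrite /Delta2 ifT //; apply/andP; split; lra.
  have hv : v <= sd f (d * phi y) y.
    apply: sd_comp => //; lra.
  have hk := kap_le g p00 pyl pyu.
  apply: (le_trans _ (ler_norm _)).
  rewrite /c; apply: ler_pM => //.
move: (le_trans H1 HI); rewrite integral_cst; last exact: measurable_itv.
have hm : (lebesgue_measure (`[(z - eps)%R, (z + eps)%R] : set R) = ((z + eps) - (z - eps))%:E)%E.
  rewrite lebesgue_measure_itv /=.
  have epsp : 0 < eps by rewrite /eps; apply: divr_gt0 => //; apply: mulr_gt0.
  rewrite ifT ?lte_fin; first by rewrite -EFinD.
  lra.
move=> H; move: (H); rewrite (_ : Measure.sort _ _ = ((z+eps)-(z-eps))%:E); last exact: hm.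
rewrite -EFinM lee_fin /eps => H2.
suff -> : c * (d * p0 / 5) = c * (z + d * p0 / 10 - (z - d * p0 / 10)) by [].
by congr (_ * _); field.
Qed.
End Z.

End PartE.

Section PartF.
Import Order.TTheory GRing.Theory Num.Theory.
Import numFieldNormedType.Exports.
Set Implicit Arguments. Unset Strict Implicit.
Local Open Scope classical_set_scope.
Local Open Scope ring_scope.

Section PC.
Variable R : realType.
Implicit Types f : R -> R.

Lemma pc f (g d r h x0 : R) : convex_on_open f -> 0 < d ->
  linear_on (-1) (-1 + 100 * d^+2) f -> linear_on (1 - 100 * d^+2) 1 f ->
  0 < h -> h <= d -> -1 < x0 -> x0 < 1 -> 0 <= r ->
  (\int[lebesgue_measure]_(y in `[(-1 + 8 * d^+2)%R, (1 - 8 * d^+2)%R])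
      (`|phi y `^ g * Delta2 f (d * phi y) y|%R)%:E <= r%:E)%E ->
  phi x0 `^ (g + 1) * `|Delta2 f (h * phi x0) x0| <= 20 / kap g * r / d.
Proof.
move=> cf d0 linL linR h0 hd xl xr r0 HI.
have d20 := sqr_ge0 d.
have d2p : 0 < d^+2 by rewrite exprn_gt0.
have ex0 : -1 <= x0 <= 1 by apply/andP; split; lra.
have ep0 := phi_sq ex0.
set p0 := phi x0 in ep0 *.
have p00 : 0 < p0.
  rewrite /p0 /phi sqrtr_gt0.
  have : 0 < (1 - x0) * (1 + x0) by apply: mulr_gt0; lra.
  lra.
have k0 := kap_gt0 g.
have rhs0 : 0 <= 20 / kap g * r / d.
  by apply: divr_ge0; [apply: mulr_ge0 => //; apply: divr_ge0 => //; exact: ltW|exact: ltW].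
have pg0 : 0 <= p0 `^ (g + 1) by exact: powR_ge0.
set s := h * p0.
have s0 : 0 <= s by rewrite /s; apply: mulr_ge0; lra.
have sd0 : s <= d * p0 by rewrite /s; apply: ler_wpM2r; lra.
rewrite /Delta2.
case: ifPn => [/andP[c1 c2]|_]; last by rewrite normr0 mulr0.
rewrite -/(sd f s x0).
have hpa : p0^+2 <= 2 * (1 + x0).
  have : 0 <= (1 + x0) * (1 + x0) by apply: mulr_ge0; lra.
  rewrite ep0; lra.
have hpb : p0^+2 <= 2 * (1 - x0).
  have : 0 <= (1 - x0) * (1 - x0) by apply: mulr_ge0; lra.
  rewrite ep0; lra.
have [xL|xL] := lerP x0 (-1 + 80 * d^+2).
  have hs : s <= 13 * d^+2.
    apply: le_of_sqr; first by lra.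
    have h1 : s^+2 <= d^+2 * p0^+2 by rewrite -exprMn ler_sqr ?nnegrE //; apply: mulr_ge0; lra.
    have h2 : d^+2 * p0^+2 <= d^+2 * (160 * d^+2) by apply: ler_wpM2l => //; lra.
    rewrite (_ : (13 * d^+2)^+2 = 169 * (d^+2 * d^+2)); last by ring.
    have d4 : 0 <= d^+2 * d^+2 by apply: mulr_ge0.
    lra.
  by rewrite (@lin0 R f (-1) (-1 + 100 * d^+2)) ?normr0 ?mulr0 //; lra.
have [xR|xR] := lerP (1 - 80 * d^+2) x0.
  have hs : s <= 13 * d^+2.
    apply: le_of_sqr; first by lra.
    have h1 : s^+2 <= d^+2 * p0^+2 by rewrite -exprMn ler_sqr ?nnegrE //; apply: mulr_ge0; lra.
    have h2 : d^+2 * p0^+2 <= d^+2 * (160 * d^+2) by apply: ler_wpM2l => //; lra.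
    rewrite (_ : (13 * d^+2)^+2 = 169 * (d^+2 * d^+2)); last by ring.
    have d4 : 0 <= d^+2 * d^+2 by apply: mulr_ge0.
    lra.
  by rewrite (@lin0 R f (1 - 100 * d^+2) 1) ?normr0 ?mulr0 //; lra.
have hl : 80 * d^+2 <= 1 + x0 by lra.
have hr : 80 * d^+2 <= 1 - x0 by lra.
have hdpa := @dp0_le R d x0 p0 d0 hl ltac:(lra) ep0.
have hdpb := @dp0_le R d (- x0) p0 d0 ltac:(lra) ltac:(lra) ltac:(rewrite sqrrN; exact: ep0).
have sl : -1 < x0 - s by lra.
have sr : x0 + s < 1 by lra.
have hz1 : `|(x0 - s/2) - x0| <= s / 2 by rewrite (_ : x0 - s/2 - x0 = - (s/2)); [rewrite normrN ger0_norm //; lra|ring].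
have hz2 : `|x0 - x0| <= s / 2 by rewrite subrr normr0; lra.
have hz3 : `|(x0 + s/2) - x0| <= s / 2 by rewrite (_ : x0 + s/2 - x0 = s/2); [rewrite ger0_norm //; lra|ring].
have K1 := zbound cf d0 hl hr s0 sd0 hz1 r0 HI.
have K2 := zbound cf d0 hl hr s0 sd0 hz2 r0 HI.
have K3 := zbound cf d0 hl hr s0 sd0 hz3 r0 HI.
have v1 : 0 <= sd f (s/2) (x0 - s/2) by apply: sd_ge0 => //; lra.
have v2 : 0 <= sd f (s/2) x0 by apply: sd_ge0 => //; lra.
have v3 : 0 <= sd f (s/2) (x0 + s/2) by apply: sd_ge0 => //; lra.
rewrite sd_split.
set w1 := sd f (s/2) (x0 - s/2) in K1 v1 *.
set w2 := sd f (s/2) x0 in K2 v2 *.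
set w3 := sd f (s/2) (x0 + s/2) in K3 v3 *.
rewrite ger0_norm; last by lra.
rewrite powRD; last by apply/implyP => _; rewrite gt_eqF.
rewrite powRr1; last exact: ltW.
set P := p0 `^ g in K1 K2 K3 *.
have kd : 0 < kap g * d by apply: mulr_gt0.
rewrite -(ler_pM2l kd).
have -> : kap g * d * (20 / kap g * r / d) = 20 * r by field; rewrite !gt_eqF.
have e1 : kap g * P * w1 * (d * p0 / 5) = kap g * d * (P * p0) * w1 / 5 by ring.
have e2 : kap g * P * w2 * (d * p0 / 5) = kap g * d * (P * p0) * w2 / 5 by ring.
have e3 : kap g * P * w3 * (d * p0 / 5) = kap g * d * (P * p0) * w3 / 5 by ring.
rewrite e1 in K1; rewrite e2 in K2; rewrite e3 in K3.
set Q := kap g * d * (P * p0) in K1 K2 K3 *.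
have -> : kap g * d * (P * p0 * (w1 + 2 * w2 + w3)) = Q * w1 + 2 * (Q * w2) + Q * w3 by rewrite /Q; ring.
lra.
Qed.
End PC.

End PartF.

Section PartG.
Import Order.TTheory GRing.Theory Num.Theory.
Local Open Scope ring_scope.

Lemma pointwise (R : realType) (beta q g K r d t D : R) :
  1 < q -> g = 2 * beta - 1 + q^-1 -> 0 < t -> 0 <= D ->
  t `^ (g + 1) * D <= K * r / d ->
  (t `^ (2 * beta) * D) `^ q <= (K * r / d) `^ (q - 1) * (t `^ g * D).
Proof.
move=> q1 eg t0 D0 H.
have q0 : q != 0 by rewrite gt_eqF //; lra.
have -> : (t `^ (2 * beta) * D) `^ q = (t `^ (g + 1) * D) `^ (q - 1) * (t `^ g * D).
  rewrite !powRM ?powR_ge0 // -!powRrM.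
  have -> : t `^ (2 * beta * q) = t `^ ((g + 1) * (q - 1)) * t `^ g.
    rewrite -powRD; last by apply/implyP => _; rewrite gt_eqF.
    by congr (_ `^ _); rewrite eg; field.
  have -> : D `^ q = D `^ (q - 1) * D.
    rewrite -{3}(powRr1 D0) -powRD; last by apply/implyP; rewrite subrK (negbTE q0).
    by rewrite subrK.
  ring.
apply: ler_wpM2r; first by apply: mulr_ge0 => //; exact: powR_ge0.
apply: (@ge0_ler_powR R (q - 1) ltac:(lra)) => //; rewrite nnegrE.
  by apply: mulr_ge0 => //; exact: powR_ge0.
apply: le_trans H; by apply: mulr_ge0 => //; exact: powR_ge0.
Qed.

Lemma alg (R : realType) (K r d q : R) : 0 < K -> 0 <= r -> 0 < d -> 1 < q ->
  ((K * r / d) `^ (q - 1) * r) `^ q^-1 = K `^ (1 - q^-1) * d `^ (q^-1 - 1) * r.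
Proof.
move=> K0 r0 d0 q1.
have q0 : q != 0 by rewrite gt_eqF //; lra.
set a := 1 - q^-1.
have dp : 0 <= d^-1 by rewrite invr_ge0 ltW.
rewrite powRM ?powR_ge0 // -powRrM.
have -> : (q - 1) * q^-1 = a by rewrite /a; field.
rewrite !powRM ?mulr_ge0 //; try exact: ltW.
have hdv : (d^-1) `^ a = d `^ (q^-1 - 1).
  have -> : q^-1 - 1 = - a by rewrite /a opprB.
  rewrite powRN.
  have hn : d `^ a != 0 by rewrite gt_eqF // powR_gt0.
  apply: (mulIf hn); rewrite mulVf // -powRM ?mulVf ?gt_eqF //; try exact: ltW.
  by rewrite powR1.
have hr : r `^ a * r `^ q^-1 = r.
  rewrite -powRD; last by apply/implyP; rewrite /a subrK oner_eq0.
  by rewrite /a subrK powRr1.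
rewrite hdv; transitivity (K `^ a * d `^ (q^-1 - 1) * (r `^ a * r `^ q^-1)); first ring.
by rewrite hr.
Qed.

End PartG.

Theorem lemma5p2 (R : realType) (beta q : R) (hq : 1 < q) :
  exists c : R, 0 < c /\
  forall (delta : R) (f : R -> R),
    0 < delta < 1 / 100 ->
    convex_on_open f ->
    in_Wq beta q f ->
    linear_on (-1) (-1 + 100 * delta ^+ 2) f ->
    linear_on (1 - 100 * delta ^+ 2) 1 f ->
    (Omega2 f delta (fun x => (phi x `^ (2 * beta))%R) q <=
       ((c * delta `^ (q^-1 - 1))%R)%:E *
       Omega2 f delta (fun x => (phi x `^ (2 * beta - 1 + q^-1))%R) 1)%E.
Proof.
have q0 : q != 0 by rewrite gt_eqF //; lra.
have pq : 0 < q^-1 < 1.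
  by rewrite invr_gt0 invf_lt1 /=; lra.
set p := q^-1 in pq *.
set g := 2 * beta - 1 + p.
set K := 20 / kap g.
have K0 : 0 < K by rewrite /K divr_gt0 // kap_gt0.
exists (K `^ (1 - p)); split; first exact: powR_gt0.
move=> d f /andP[d0 d1] cf _ linL linR.
set O1 := Omega2 f d (fun x => phi x `^ g) 1.
have L1 (a b : R) G : Lqnorm a b 1 G =
   (\int[lebesgue_measure]_(x in `[a, b]%classic) (`|G x|)%:E)%E.
  rewrite /Lqnorm invr1 poweRe1; last by apply: integral_ge0 => x _; rewrite lee_fin powR_ge0.
  by apply: eq_integral => x _; rewrite powRr1.
have elem1 (h : R) : 0 < h <= d -> (Lqnorm (-1 + 8 * h ^+ 2)%R (1 - 8 * h ^+ 2)%R 1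
     (fun x => (phi x `^ g * Delta2 f (h * phi x) x)%R) <= O1)%E.
  move=> hh; apply: ereal_sup_ubound; exists h => //=.
have O10 : (0 <= O1)%E.
  apply: le_trans (elem1 d _); last by rewrite d0 lexx.
  exact: poweR_ge0.
case: (eqVneq O1 (+oo%E)) => [ey|efin].
  by rewrite ey gt0_muley ?leey // lte_fin mulr_gt0 // powR_gt0.
have : O1 \is a fin_num by rewrite ge0_fin_numE // ltey.
move=> /fineK O1E; set r := fine O1 in O1E.
have r0 : 0 <= r by rewrite -lee_fin O1E.
rewrite -O1E.
have HI : (\int[lebesgue_measure]_(y in `[(-1 + 8 * d^+2)%R, (1 - 8 * d^+2)%R])
      (`|phi y `^ g * Delta2 f (d * phi y) y|%R)%:E <= r%:E)%E.
  by rewrite -L1 O1E elem1 // d0 lexx.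
apply: ge_ereal_sup => _ [h /= hh <-].
move: hh; rewrite in_itv /= => /andP[h0 hd].
set M := (K * r / d) `^ (q - 1).
have M0 : 0 <= M by exact: powR_ge0.
have Hh : (\int[lebesgue_measure]_(y in `[(-1 + 8 * h^+2)%R, (1 - 8 * h^+2)%R])
      (`|phi y `^ g * Delta2 f (h * phi y) y|%R)%:E <= r%:E)%E.
  by rewrite -L1 O1E elem1 // h0 hd.
have h2 : 0 < h^+2 by rewrite exprn_gt0.
have pw : forall x, `[(-1 + 8 * h^+2)%R, (1 - 8 * h^+2)%R]%classic x ->
    `|phi x `^ (2 * beta) * Delta2 f (h * phi x) x| `^ q <=
    M * `|phi x `^ g * Delta2 f (h * phi x) x|.
  move=> x; rewrite /= in_itv /= => /andP[xa xb].
  have x1 : -1 < x by lra.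
  have x2 : x < 1 by lra.
  have hpc := pc cf d0 linL linR h0 hd x1 x2 r0 HI.
  have t0 : 0 < phi x.
    rewrite /phi sqrtr_gt0.
    have : 0 < (1 - x) * (1 + x) by apply: mulr_gt0; lra.
    lra.
  rewrite !normrM !(@ger0_norm _ (_ `^ _)) ?powR_ge0 //.
  by apply: pointwise => //; rewrite normr_ge0.
have HE : (\int[lebesgue_measure]_(x in `[(-1 + 8 * h^+2)%R, (1 - 8 * h^+2)%R])
     (`|phi x `^ (2 * beta) * Delta2 f (h * phi x) x| `^ q)%:E <= (M * r)%:E)%E.
  apply: (@le_trans _ _ (\int[lebesgue_measure]_(x in `[(-1 + 8 * h^+2)%R, (1 - 8 * h^+2)%R])
     (M%:E * (`|phi x `^ g * Delta2 f (h * phi x) x|)%:E))%E).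
    apply: le_int_nm => [x _|x _|x hx].
    - by rewrite lee_fin powR_ge0.
    - by apply: mule_ge0; rewrite lee_fin.
    - by split => //; rewrite -EFinM lee_fin; exact: pw.
  apply: (le_trans (@int_scale_le R _ (fun x => (`|phi x `^ g * Delta2 f (h * phi x) x|)%:E) M M0 _)).
    by move=> x _; rewrite lee_fin.
  by rewrite EFinM; apply: lee_wpmul2l => //; rewrite lee_fin.
rewrite /Lqnorm.
set E := (\int[lebesgue_measure]_(x in _) _)%E in HE *.
have E0 : (0 <= E)%E by apply: integral_ge0 => x _; rewrite lee_fin powR_ge0.
have Efin : E \is a fin_num.
  by rewrite ge0_fin_numE // (le_lt_trans HE) // ltey.
rewrite -(fineK Efin) poweR_EFin -EFinM lee_fin.
rewrite /p -(@alg R K r d q K0 r0 d0 hq) -/p.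
apply: (@ge0_ler_powR R p ltac:(lra)); rewrite ?nnegrE.
- by rewrite fine_ge0.
- by apply: mulr_ge0.
- by rewrite -lee_fin fineK.
Qed.
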